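(* Let $(A,[\cdot,\cdot])$ and $(V,[\cdot,\cdot]_V)$ be Malcev algebras and $(V;[\cdot,\cdot]_V,\rho)$ an $A$-module Malcev algebra. Then $A\oplus V$ with the bracket $[x+a,y+b]_\rho=[x,y]+\rho(x)b-\rho(y)a+[a,b]_V$ ($x,y\in A$, $a,b\in V$) is a Malcev algebra.
   Context: Field of characteristic zero. A Malcev algebra is a vector space with an anti-symmetric bracket satisfying $J(x,y,[x,z])=[J(x,y,z),x]$, $J(x,y,z)=[[x,y],z]+[[z,x],y]+[[y,z],x]$. A representation of $(A,[\cdot,\cdot])$ on $V$ is a linear $\rho:A\to\mathrm{End}(V)$ with $\rho([[x,y],z])=\rho(x)\rho(y)\rho(z)-\rho(z)\rho(x)\rho(y)+\rho(y)\rho([z,x])-\rho([y,z])\rho(x)$. An $A$-module Malcev algebra $(V;[\cdot,\cdot]_V,\rho)$ consists of a Malcev algebra $(V,[\cdot,\cdot]_V)$ and a representation $\rho$ of $A$ on $V$ such that for all $x,y\in A$, $a,b,c\in V$: $\rho([x,y])[a,b]_V=\rho(x)[\rho(y)a,b]_V-[\rho(y)\rho(x)a,b]_V-[\rho(x)\rho(y)b,a]_V+\rho(y)[\rho(x)b,a]_V$; $[\rho(x)a,\rho(y)b]_V=[\rho([x,y])a,b]_V-\rho(x)[\rho(y)a,b]_V+\rho(y)\rho(x)[a,b]_V+[\rho(y)\rho(x)b,a]_V$; $[\rho(x)a,[b,c]_V]_V=[[\rho(x)b,a]_V,c]_V-\rho(x)[[b,a]_V,c]_V-[\rho(x)[a,c]_V,b]_V-[[\rho(x)c,b]_V,a]_V$.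 *)

(* Defs.v *)
From HB Require Import structures.
From mathcomp Require Import all_boot all_order all_algebra.
Set Implicit Arguments. Unset Strict Implicit. Unset Printing Implicit Defensive.
Import GRing.Theory.
Local Open Scope ring_scope.

Section Malcev.
Variable F : fieldType.

Definition bilinear_map (U W : lmodType F) (br : U -> U -> W) : Prop :=
  (forall x, linear (br x)) /\ (forall y, linear (fun x => br x y)).

Definition jacobian (U : lmodType F) (br : U -> U -> U) (x y z : U) : U :=
  br (br x y) z + br (br z x) y + br (br y z) x.

Definition malcev (U : lmodType F) (br : U -> U -> U) : Prop :=
  [/\ bilinear_map br,
      (forall x y, br x y = - br y x) &
      (forall x y z, jacobian br x y (br x z) = br (jacobian br x y z) x)].

Definition malcev_rep (A V : lmodType F) (brA : A -> A -> A) (rho : A -> V -> V) : Prop :=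
  [/\ (forall x, linear (rho x)),
      (forall v, linear (fun x => rho x v)) &
      (forall x y z v, rho (brA (brA x y) z) v =
         rho x (rho y (rho z v)) - rho z (rho x (rho y v))
         + rho y (rho (brA z x) v) - rho (brA y z) (rho x v))].

Definition module_malcev (A V : lmodType F) (brA : A -> A -> A)
    (brV : V -> V -> V) (rho : A -> V -> V) : Prop :=
  [/\ malcev brV, malcev_rep brA rho,
      (forall x y a b, rho (brA x y) (brV a b) =
         rho x (brV (rho y a) b) - brV (rho y (rho x a)) b
         - brV (rho x (rho y b)) a + rho y (brV (rho x b) a)),
      (forall x y a b, brV (rho x a) (rho y b) =
         brV (rho (brA x y) a) b - rho x (brV (rho y a) b)
         + rho y (rho x (brV a b)) + brV (rho y (rho x b)) a) &
      (forall x a b c, brV (rho x a) (brV b c) =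
         brV (brV (rho x b) a) c - rho x (brV (brV b a) c)
         - brV (rho x (brV a c)) b - brV (brV (rho x c) b) a)].

Definition semidirect_bracket (A V : lmodType F) (brA : A -> A -> A)
    (brV : V -> V -> V) (rho : A -> V -> V) (u w : A * V) : A * V :=
  (brA u.1 w.1, rho u.1 w.2 - rho w.1 u.2 + brV u.2 w.2).

End Malcev.

(* Main.v *)
Require Import Defs.
From HB Require Import structures.
From mathcomp Require Import all_boot all_order all_algebra.
Local Open Scope ring_scope.
Import GRing.Theory.

Section Lin.
Variables (F : fieldType) (U W : lmodType F) (f : U -> W).
Hypothesis lf : linear f.
Lemma lin0 : f 0 = 0.
Proof.
have := lf 1 0 0; rewrite !scale1r !addr0 => h.
by apply: (@addrI _ (f 0)); rewrite addr0 -h.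
Qed.
Lemma linD u v : f (u + v) = f u + f v.
Proof. by have := lf 1 u v; rewrite !scale1r. Qed.
Lemma linN u : f (- u) = - f u.
Proof. by have := lf (-1) u 0; rewrite !addr0 lin0 addr0 !scaleN1r. Qed.
Lemma linZ k u : f (k *: u) = k *: f u.
Proof. by have := lf k u 0; rewrite !addr0 lin0 addr0. Qed.
End Lin.
Arguments lin0 {F U W f} lf.
Arguments linD {F U W f} lf u v.
Arguments linN {F U W f} lf u.
Arguments linZ {F U W f} lf k u.


Section ZRefl.
Variable V : zmodType.
Inductive zt := ZA of nat | ZD of zt & zt | ZN of zt | Z0.
Fixpoint zeval (env : seq V) t := match t with
  | ZA n => nth 0 env n | ZD a b => zeval env a + zeval env b
  | ZN a => - zeval env a | Z0 => 0 end.
Fixpoint addv (c d : seq int) := match c, d with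
  | [::], _ => d | _, [::] => c | x :: c', y :: d' => (x + y) :: addv c' d' end.
Fixpoint zn t : seq int := match t with
  | ZA n => rcons (nseq n 0) 1 | ZD a b => addv (zn a) (zn b)
  | ZN a => map (fun x => - x) (zn a) | Z0 => [::] end.
Fixpoint ev (env : seq V) k (c : seq int) : V := match c with
  | [::] => 0 | x :: c' => nth 0 env k *~ x + ev env k.+1 c' end.
Fixpoint allz (c : seq int) := match c with
  | [::] => true | Posz 0 :: c' => allz c' | _ => false end.
Lemma ev_add env k c d : ev env k (addv c d) = ev env k c + ev env k d.
Proof.
elim: c d k => [|x c IH] [|y d] k /=; rewrite ?addr0 ?add0r //.
by rewrite IH mulrzDr addrACA.
Qed.
Lemma ev_opp env k c : ev env k (map (fun x => - x) c) = - ev env k c.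
Proof. by elim: c k => [|x c IH] k /=; rewrite ?oppr0 // IH mulrNz opprD. Qed.
Lemma ev_atom env k n : ev env k (rcons (nseq n 0) 1) = nth 0 env (k + n).
Proof.
elim: n k => [|n IH] k /=; first by rewrite addr0 addn0.
by rewrite IH mulr0z add0r addnS.
Qed.
Lemma zn_ok env t : zeval env t = ev env 0 (zn t).
Proof.
elim: t => [n|a IHa b IHb|a IHa|] //=.
- by rewrite ev_atom.
- by rewrite ev_add IHa IHb.
- by rewrite ev_opp IHa.
Qed.
Lemma allz_ok env k c : allz c -> ev env k c = 0.
Proof.
elim: c k => [|[[|n]|n] c IH] k //= /IH ->; by rewrite addr0.
Qed.
Lemma zsound env t : allz (zn t) -> zeval env t = 0.
Proof. by move=> h; rewrite zn_ok allz_ok. Qed.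
Lemma step_pos (G E : V) : E = 0 -> G - E = 0 -> G = 0.
Proof. by move=> -> ; rewrite subr0. Qed.
Lemma step_neg (G E : V) : E = 0 -> G + E = 0 -> G = 0.
Proof. by move=> -> ; rewrite addr0. Qed.
Lemma eq_sub0 (x y : V) : x = y -> x - y = 0.
Proof. by move=> ->; rewrite subrr. Qed.
Lemma sub0_eq (x y : V) : x - y = 0 -> x = y.
Proof. by move/eqP; rewrite subr_eq0 => /eqP. Qed.
End ZRefl.
Arguments zsound {V} env t _.
Arguments sub0_eq {V x y} _.
Arguments eq_sub0 {V x y} _.
Arguments step_pos {V G} E _ _.
Arguments step_neg {V G} E _ _.


Ltac zcollect e l :=
  lazymatch e with
  | @GRing.add _ ?a ?b => let l1 := zcollect a l in zcollect b l1
  | @GRing.opp _ ?a => zcollect a l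
  | @GRing.zero _ => l
  | _ => lazymatch l with
         | context [e] => l
         | _ => constr:(e :: l)
         end
  end.
Ltac zidx e l :=
  lazymatch l with
  | (e :: _) => constr:(0%N)
  | (_ :: ?l') => let n := zidx e l' in constr:(S n)
  end.
Ltac zreify e l :=
  lazymatch e with
  | @GRing.add _ ?a ?b => let t1 := zreify a l in let t2 := zreify b l in constr:(ZD t1 t2)
  | @GRing.opp _ ?a => let t := zreify a l in constr:(ZN t)
  | @GRing.zero _ => constr:(Z0)
  | _ => let n := zidx e l in constr:(ZA n)
  end.
Ltac zmod_zero :=
  lazymatch goal with
  | |- ?e = _ =>
      let T := type of e in
      let l := zcollect e (@nil T) in
      let t := zreify e l in
      refine (zsound l t _); vm_compute; reflexivity
  end.
Ltac zmod_eq := apply: sub0_eq; zmod_zero.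

Section Main.
Variables (F : fieldType) (A V : lmodType F) (brA : A -> A -> A) (brV : V -> V -> V) (rho : A -> V -> V).
Hypothesis charF0 : [pchar F] =i pred0.
Hypotheses (bA1 : forall x, linear (brA x)) (bA2 : forall y, linear (fun x => brA x y)).
Hypotheses (bV1 : forall x, linear (brV x)) (bV2 : forall y, linear (fun x => brV x y)).
Hypotheses (lr1 : forall x, linear (rho x)) (lr2 : forall v, linear (fun x => rho x v)).
Hypothesis antiA : forall x y, brA x y = - brA y x.
Hypothesis antiV : forall x y, brV x y = - brV y x.

Lemma brAD1 x y z : brA (x + y) z = brA x z + brA y z. Proof. exact: (linD (bA2 z) x y). Qed.
Lemma brAD2 x y z : brA z (x + y) = brA z x + brA z y. Proof. exact: (linD (bA1 z) x y). Qed.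
Lemma brAN1 x z : brA (- x) z = - brA x z. Proof. exact: (linN (bA2 z) x). Qed.
Lemma brAN2 x z : brA z (- x) = - brA z x. Proof. exact: (linN (bA1 z) x). Qed.
Lemma brA01 z : brA 0 z = 0. Proof. exact: (lin0 (bA2 z)). Qed.
Lemma brA02 z : brA z 0 = 0. Proof. exact: (lin0 (bA1 z)). Qed.
Lemma brAZ1 k x z : brA (k *: x) z = k *: brA x z. Proof. exact: (linZ (bA2 z) k x). Qed.
Lemma brAZ2 k x z : brA z (k *: x) = k *: brA z x. Proof. exact: (linZ (bA1 z) k x). Qed.
Lemma brVD1 x y z : brV (x + y) z = brV x z + brV y z. Proof. exact: (linD (bV2 z) x y). Qed.
Lemma brVD2 x y z : brV z (x + y) = brV z x + brV z y. Proof. exact: (linD (bV1 z) x y). Qed.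
Lemma brVN1 x z : brV (- x) z = - brV x z. Proof. exact: (linN (bV2 z) x). Qed.
Lemma brVN2 x z : brV z (- x) = - brV z x. Proof. exact: (linN (bV1 z) x). Qed.
Lemma brV01 z : brV 0 z = 0. Proof. exact: (lin0 (bV2 z)). Qed.
Lemma brV02 z : brV z 0 = 0. Proof. exact: (lin0 (bV1 z)). Qed.
Lemma brVZ1 k x z : brV (k *: x) z = k *: brV x z. Proof. exact: (linZ (bV2 z) k x). Qed.
Lemma brVZ2 k x z : brV z (k *: x) = k *: brV z x. Proof. exact: (linZ (bV1 z) k x). Qed.
Lemma rhoD1 x y z : rho (x + y) z = rho x z + rho y z. Proof. exact: (linD (lr2 z) x y). Qed.
Lemma rhoD2 x y z : rho z (x + y) = rho z x + rho z y. Proof. exact: (linD (lr1 z) x y). Qed.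
Lemma rhoN1 x z : rho (- x) z = - rho x z. Proof. exact: (linN (lr2 z) x). Qed.
Lemma rhoN2 x z : rho z (- x) = - rho z x. Proof. exact: (linN (lr1 z) x). Qed.
Lemma rho01 z : rho 0 z = 0. Proof. exact: (lin0 (lr2 z)). Qed.
Lemma rho02 z : rho z 0 = 0. Proof. exact: (lin0 (lr1 z)). Qed.
Lemma rhoZ1 k x z : rho (k *: x) z = k *: rho x z. Proof. exact: (linZ (lr2 z) k x). Qed.
Lemma rhoZ2 k x z : rho z (k *: x) = k *: rho z x. Proof. exact: (linZ (lr1 z) k x). Qed.

Lemma self_opp0 (W : lmodType F) (w : W) : w = - w -> w = 0.
Proof.
move=> h; have h2 : (2%:R : F) *: w = 0 by rewrite scaler_nat mulr2n {1}h addNr.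
have two : (2%:R : F) != 0 by rewrite (pcharf0P _).1.
by rewrite -[w]scale1r -(mulVf two) -scalerA h2 scaler0.
Qed.
Lemma brAxx x : brA x x = 0. Proof. exact: self_opp0 (antiA x x). Qed.
Lemma brVxx x : brV x x = 0. Proof. exact: self_opp0 (antiV x x). Qed.

Ltac expand := repeat progress rewrite ?brAD1 ?brAD2 ?brAN1 ?brAN2 ?brA01 ?brA02
  ?brVD1 ?brVD2 ?brVN1 ?brVN2 ?brV01 ?brV02 ?rhoD1 ?rhoD2 ?rhoN1 ?rhoN2 ?rho01 ?rho02
  ?opprK ?oppr0 ?addr0 ?add0r.

Lemma pe (p q : A * V) : p.1 = q.1 -> p.2 = q.2 -> p = q.
Proof. by case: p q => [? ?] [? ?] /= -> ->. Qed.

Hypothesis malA : forall x y z, jacobian brA x y (brA x z) = brA (jacobian brA x y z) x.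
Hypothesis malV : forall x y z, jacobian brV x y (brV x z) = brV (jacobian brV x y z) x.
Hypothesis rep : forall x y z v, rho (brA (brA x y) z) v =
         rho x (rho y (rho z v)) - rho z (rho x (rho y v))
         + rho y (rho (brA z x) v) - rho (brA y z) (rho x v).
Hypothesis m1 : forall x y a b, rho (brA x y) (brV a b) =
         rho x (brV (rho y a) b) - brV (rho y (rho x a)) b
         - brV (rho x (rho y b)) a + rho y (brV (rho x b) a).
Hypothesis m2 : forall x y a b, brV (rho x a) (rho y b) =
         brV (rho (brA x y) a) b - rho x (brV (rho y a) b)
         + rho y (rho x (brV a b)) + brV (rho y (rho x b)) a.
Hypothesis m3 : forall x a b c, brV (rho x a) (brV b c) =
         brV (brV (rho x b) a) c - rho x (brV (brV b a) c)
         - brV (rho x (brV a c)) b - brV (brV (rho x c) b) a.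

Lemma sd_malcev_id x a y b z c :
  let sb := semidirect_bracket brA brV rho in
  jacobian sb (x, a) (y, b) (sb (x, a) (z, c)) = sb (jacobian sb (x, a) (y, b) (z, c)) (x, a).
Proof.
move=> sb; rewrite /sb /jacobian /semidirect_bracket /=.
apply: pe => /=.
  exact: malA.
apply: sub0_eq.
move: (eq_sub0 (rep x x y c)) (eq_sub0 (rep x y z a)) (eq_sub0 (rep x z y a)) (eq_sub0 (rep y z x a)) (eq_sub0 (rep z x y a)) (eq_sub0 (m1 x y a c)) (eq_sub0 (m2 x y c a)) (eq_sub0 (rep x z x b)) (eq_sub0 (m1 x z b a)) (eq_sub0 (m2 z x a b)) (eq_sub0 (m2 x x b c)) (eq_sub0 (m3 x a b c)) (eq_sub0 (m3 x a c b)) (eq_sub0 (m3 x b c a)) (eq_sub0 (m3 x c a b)) (eq_sub0 (m2 y z a a)) (eq_sub0 (m3 y a c a)) (eq_sub0 (m3 z a a b)) (eq_sub0 (malV a b c)).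
rewrite /jacobian; expand.
rewrite ?(antiV b a) ?(antiV c a) ?(antiA z x) ?(brAxx x) ?(antiA z y) ?(brVxx a) ?(antiA y x) ?(antiV c b).
expand.
rewrite ?(antiV (rho x b) c) ?(antiV (brV a c) a) ?(antiV (rho x c) b) ?(antiV (rho z a) a) ?(antiA (brA y z) x) ?(antiV (rho z a) (rho x b)) ?(antiV (rho x c) a) ?(antiV (rho x b) a).
rewrite ?(antiV (rho y a) (brV a c)) ?(antiV (rho z a) b) ?(antiV (rho x a) (brV b c)) ?(antiV (rho z b) a) ?(antiV (brV b c) a) ?(antiV (brV a c) b) ?(antiA (brA x z) y) ?(antiV (rho x a) c).
rewrite ?(antiV (brV a b) c) ?(antiV (rho y c) a) ?(antiV (rho x a) b) ?(antiA (brA x z) x) ?(antiA (brA x y) z) ?(antiV (rho x c) (brV a b)) ?(antiV (rho y a) c) ?(antiV (rho x b) (brV a c)).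
rewrite ?(antiV (rho y a) (rho x c)) ?(antiV (rho z a) (brV a b)).
expand.
rewrite ?(antiV (brV c (rho x b)) a) ?(antiV (rho x (rho x c)) b) ?(antiV (brV a (rho z a)) b) ?(antiV (brV a (rho x c)) b) ?(antiV (rho y (rho x a)) c) ?(antiV (brV a (rho x b)) c) ?(antiV (brV b (brV a c)) a) ?(antiV (rho y (brV a c)) a).
rewrite ?(antiV (brV b (rho x c)) a) ?(antiV (brV b (rho z a)) a) ?(antiV (rho x (brV a c)) b) ?(antiV (brV a (rho z b)) a) ?(antiV (rho x (rho z a)) b) ?(antiV (rho x (brV b c)) a) ?(antiV (brV a (brV a c)) b) ?(antiV (rho (brA x z) a) b).
rewrite ?(antiV (rho (brA x z) b) a) ?(antiV (rho z (rho y a)) a) ?(antiV (brV a (brV b c)) a) ?(antiV (brV c (rho x a)) b) ?(antiV (rho (brA y z) a) a) ?(antiV (rho x (brV a b)) c) ?(antiV (rho (brA x y) c) a) ?(antiV (rho z (rho x b)) a).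
rewrite ?(antiV (brV c (rho y a)) a) ?(antiV (rho x (rho z b)) a) ?(antiV (rho z (brV a b)) a) ?(antiV (rho x (rho y c)) a) ?(antiV (brV c (brV a b)) a) ?(antiV (brV a (rho y c)) a).
expand.
move=> h0 h1 h2 h3 h4 h5 h6 h7 h8 h9 h10 h11 h12 h13 h14 h15 h16 h17 h18.
apply: (step_pos _ h0).
apply: (step_neg _ h1).
apply: (step_neg _ h2).
apply: (step_neg _ h3).
apply: (step_neg _ h4).
apply: (step_pos _ h5).
apply: (step_pos _ h6).
apply: (step_pos _ h7).
apply: (step_pos _ h8).
apply: (step_pos _ h9).
apply: (step_pos _ h10).
apply: (step_neg _ h11).
apply: (step_neg _ h12).
apply: (step_neg _ h13).
apply: (step_neg _ h14).
apply: (step_pos _ h15).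
apply: (step_pos _ h16).
apply: (step_pos _ h17).
apply: (step_pos _ h18).
zmod_zero.
Qed.

Lemma sd_malcev : malcev (semidirect_bracket brA brV rho).
Proof.
split.
- split.
  + move=> [x a] k [y b] [y' b']; apply: pe => /=.
      by rewrite brAD2 brAZ2.
    rewrite !(rhoD2, rhoZ2, rhoD1, rhoZ1, brVD2, brVZ2) !(scalerDr, scalerN).
    zmod_eq.
  + move=> [y b] k [x a] [x' a']; apply: pe => /=.
      by rewrite brAD1 brAZ1.
    rewrite !(rhoD2, rhoZ2, rhoD1, rhoZ1, brVD1, brVZ1) !(scalerDr, scalerN).
    zmod_eq.
- move=> [x a] [y b]; apply: pe => /=; first exact: antiA.
  rewrite (antiV b a); zmod_eq.
- move=> [x a] [y b] [z c]; exact: sd_malcev_id.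
Qed.
End Main.

Theorem proposition4p2 (F : fieldType) (charF0 : [pchar F] =i pred0)
  (A V : lmodType F) (brA : A -> A -> A) (brV : V -> V -> V) (rho : A -> V -> V) :
  malcev brA -> malcev brV -> module_malcev brA brV rho ->
  malcev (semidirect_bracket brA brV rho : A * V -> A * V -> A * V).
Proof.
move=> [[bA1 bA2] antiA malA] [[bV1 bV2] antiV malV] [_ [lr1 lr2 rep] m1 m2 m3].
by apply: sd_malcev.
Qed.
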